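(* Let $\mathcal{X}=L^p$ for some $p\in\{0,1,\infty\}$, let $\varphi$ be a dynamic LM-measure on $\mathcal{X}$ and let $\mu$ be a projective update rule. If $\varphi$ is $\mu$-acceptance time consistent, then $\varphi$ is weakly acceptance time consistent, i.e. for all $X\in\mathcal{X}$, $s>t$, $m_s\in\bar L^0_s$: $\varphi_s(X)\ge m_s\Rightarrow\varphi_t(X)\ge\operatorname{Essinf}_tm_s$. If $\varphi$ is $\mu$-rejection time consistent, then $\varphi$ is weakly rejection time consistent, i.e. $\varphi_s(X)\le m_s\Rightarrow\varphi_t(X)\le\operatorname{Esssup}_tm_s$ for all such $X,s,t,m_s$.
   Context: Let $(\Omega,\mathcal{F},\{\mathcal{F}_t\}_{t\in\mathbb{T}},P)$ be a filtered probability space, $\mathbb{T}=\{0,\dots,T\}$, $\mathcal{F}_0$ trivial. $\bar L^0_t$ denotes $\mathcal{F}_t$-measurable random variables with values in $[-\infty,\infty]$, $\bar L^0=\bar L^0_T$, $L^p=L^p(\Omega,\mathcal{F}_T,P)$. A dynamic LM-measure is a family $\{\varphi_t\}_{t\in\mathbb{T}}$ of maps $\varphi_t:\mathcal{X}\to\bar L^0_t$ with $1_A\varphi_t(X)=1_A\varphi_t(1_AX)$ for $A\in\mathcal{F}_t$ and $X\le Y\Rightarrow\varphi_t(X)\le\varphi_t(Y)$. An update rule is a family $\{\mu_{t,s}:s>t\}$ of maps $\mu_{t,s}:\bar L^0_s\times\mathcal{X}\to\bar L^0_t$ with $1_A\mu_{t,s}(m,X)=1_A\mu_{t,s}(1_Am,X)$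 for $A\in\mathcal{F}_t$ and $m\ge m'\Rightarrow\mu_{t,s}(m,X)\ge\mu_{t,s}(m',X)$; it is projective if there are maps $\mu_t:\bar L^0\to\bar L^0_t$ with $\mu_{t,s}(m,X)=\mu_t(m)$ for all $s>t$, $X$, $m\in\bar L^0_s$, and $\mu_t(m_t)=m_t$ for $m_t\in\bar L^0_t$. $\varphi$ is $\mu$-acceptance (resp. $\mu$-rejection) time consistent if for all $s>t$, $X$, $m_s\in\bar L^0_s$: $\varphi_s(X)\ge m_s\Rightarrow\varphi_t(X)\ge\mu_{t,s}(m_s,X)$ (resp. with $\le$). $\operatorname{Essinf}_t$ on bounded variables: the largest $\mathcal{F}_t$-measurable random variable a.s. dominated by the argument; on $\bar L^0$: $\operatorname{Essinf}_tX:=\lim_n\operatorname{Essinf}_t(X^+\wedge n)-\lim_n\operatorname{Esssup}_t(X^-\wedge n)$, with $\operatorname{Esssup}_tX=-\operatorname{Essinf}_t(-X)$ and convention $\infty-\infty=-\infty$. *)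

(* Defs.v *)
From HB Require Import structures.
From mathcomp Require Import all_boot all_order all_algebra.
From mathcomp Require Import all_classical all_reals all_analysis.
From mathcomp Require Import measurable_realfun.
From Stdlib Require Import ClassicalEpsilon.
Set Implicit Arguments. Unset Strict Implicit. Unset Printing Implicit Defensive.
Import Order.TTheory GRing.Theory Num.Theory.
Local Open Scope classical_set_scope.
Local Open Scope ring_scope.
Local Open Scope ereal_scope.

Section LM.
Context (d : measure_display) (Omega : measurableType d) (R : realType)
  (P : probability Omega R) (F : nat -> set (set Omega)) (T : nat).

Definition as_le (f g : Omega -> \bar R) : Prop :=
  almost_everywhere P (fun w => f w <= g w).
Definition as_eq (f g : Omega -> \bar R) : Prop :=
  almost_everywhere P (fun w => f w = g w).
Definition as_leR (f g : Omega -> R) : Prop :=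
  almost_everywhere P (fun w => (f w <= g w)%R).

Definition filtration : Prop :=
  (forall t, (t <= T)%N -> sigma_algebra setT (F t)) /\
  (forall t, (t <= T)%N -> forall A, F t A -> measurable A) /\
  (forall t s, (t <= s <= T)%N -> forall A, F t A -> F s A) /\
  (forall A, F 0%N A -> A = set0 \/ A = setT).

Definition L0bar (t : nat) (f : Omega -> \bar R) : Prop :=
  forall B : set (\bar R), measurable B -> F t (f @^-1` B).

Definition L0R (t : nat) (X : Omega -> R) : Prop :=
  forall B : set R, measurable B -> F t (X @^-1` B).

Inductive pexp := p0 | p1 | pinf.

Definition Lp (p : pexp) (X : Omega -> R) : Prop :=
  match p with
  | p0 => L0R T X
  | p1 => L0R T X /\ P.-integrable setT (EFin \o X)
  | pinf => L0R T X /\ exists C : R, as_leR (fun w => `|X w|%R) (fun _ => C)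
  end.

Definition indicE (A : set Omega) (w : Omega) : \bar R := (\1_A w)%:E.

Definition dynamic_LM (p : pexp) (phi : nat -> (Omega -> R) -> (Omega -> \bar R)) :=
  (forall t X, (t <= T)%N -> Lp p X -> L0bar t (phi t X)) /\
  (forall t X A, (t <= T)%N -> Lp p X -> F t A ->
     as_eq (fun w => indicE A w * phi t X w)
           (fun w => indicE A w * phi t (fun v => (\1_A v * X v)%R) w)) /\
  (forall t X Y, (t <= T)%N -> Lp p X -> Lp p Y -> as_leR X Y ->
     as_le (phi t X) (phi t Y)).

Definition update_rule (p : pexp)
  (mu : nat -> nat -> (Omega -> \bar R) -> (Omega -> R) -> (Omega -> \bar R)) :=
  (forall t s m X, (t < s <= T)%N -> L0bar s m -> Lp p X ->
     L0bar t (mu t s m X)) /\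
  (forall t s m X A, (t < s <= T)%N -> L0bar s m -> Lp p X -> F t A ->
     as_eq (fun w => indicE A w * mu t s m X w)
           (fun w => indicE A w * mu t s (fun v => indicE A v * m v) X w)) /\
  (forall t s m m' X, (t < s <= T)%N -> L0bar s m -> L0bar s m' -> Lp p X ->
     as_le m' m -> as_le (mu t s m' X) (mu t s m X)).

Definition projective (p : pexp)
  (mu : nat -> nat -> (Omega -> \bar R) -> (Omega -> R) -> (Omega -> \bar R)) :=
  exists mut : nat -> (Omega -> \bar R) -> (Omega -> \bar R),
    (forall t m, (t <= T)%N -> L0bar T m -> L0bar t (mut t m)) /\
    (forall t s m X, (t < s <= T)%N -> L0bar s m -> Lp p X ->
       as_eq (mu t s m X) (mut t m)) /\
    (forall t m, (t <= T)%N -> L0bar t m -> as_eq (mut t m) m).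

Definition mu_acc_tc (p : pexp) phi mu :=
  forall X t s m, (t < s <= T)%N -> Lp p X -> L0bar s m ->
    as_le m (phi s X) -> as_le (mu t s m X) (phi t X).

Definition mu_rej_tc (p : pexp) phi mu :=
  forall X t s m, (t < s <= T)%N -> Lp p X -> L0bar s m ->
    as_le (phi s X) m -> as_le (phi t X) (mu t s m X).

(* Essinf_t on bounded variables: the largest F_t-measurable random variable
   a.s. dominated by the argument (chosen by Hilbert's epsilon). *)
Definition is_essinf_bdd (t : nat) (X Y : Omega -> \bar R) : Prop :=
  L0bar t Y /\ as_le Y X /\ (forall Z, L0bar t Z -> as_le Z X -> as_le Z Y).

Definition essinf_bdd (t : nat) (X : Omega -> \bar R) : Omega -> \bar R :=
  epsilon (inhabits (fun _ => -oo)) (is_essinf_bdd t X).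

Definition esssup_bdd (t : nat) (X : Omega -> \bar R) : Omega -> \bar R :=
  fun w => - essinf_bdd t (fun v => - X v) w.

(* Essinf_t on \bar L^0:
   lim_n Essinf_t (X^+ /\ n) - lim_n Esssup_t (X^- /\ n), the (a.s.
   nondecreasing) limits being written as suprema; +oo - +oo = -oo in
   mathcomp's extended reals, matching the paper's convention. *)
Definition Essinf (t : nat) (X : Omega -> \bar R) : Omega -> \bar R :=
  fun w =>
    ereal_sup (range (fun n : nat =>
       essinf_bdd t (fun v => mine (maxe (X v) 0) n%:R%:E) w))
  - ereal_sup (range (fun n : nat =>
       esssup_bdd t (fun v => mine (maxe (- X v) 0) n%:R%:E) w)).

Definition Esssup (t : nat) (X : Omega -> \bar R) : Omega -> \bar R :=
  fun w => - Essinf t (fun v => - X v) w.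

Definition weak_acc_tc (p : pexp) phi :=
  forall X t s m, (t < s <= T)%N -> Lp p X -> L0bar s m ->
    as_le m (phi s X) -> as_le (Essinf t m) (phi t X).

Definition weak_rej_tc (p : pexp) phi :=
  forall X t s m, (t < s <= T)%N -> Lp p X -> L0bar s m ->
    as_le (phi s X) m -> as_le (phi t X) (Esssup t m).

End LM.

(* Main.v *)
Require Import Defs.
From HB Require Import structures.
From mathcomp Require Import all_boot all_order all_algebra.
From mathcomp Require Import all_classical all_reals all_analysis.
From mathcomp Require Import measurable_realfun.
From Stdlib Require Import ClassicalEpsilon.
Set Implicit Arguments. Unset Strict Implicit. Unset Printing Implicit Defensive.
Import Order.TTheory GRing.Theory Num.Theory.
Local Open Scope classical_set_scope.
Local Open Scope ring_scope.
Local Open Scope ereal_scope.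

Section Aux.
Context (d : measure_display) (Omega : measurableType d) (R : realType)
  (P : probability Omega R) (F : nat -> set (set Omega)) (T : nat).

Lemma L0bar_mf (hF : filtration F T) t (f : Omega -> \bar R) : (t <= T)%N ->
  L0bar F t f <-> measurable_fun (setT : set (g_sigma_algebraType (F t))) f.
Proof.
move=> tT; have sa := hF.1 t tT.
have E : (measurable : set (set (g_sigma_algebraType (F t)))) = F t.
  exact: sigma_algebra_id.
split.
- move=> h _ B mB; rewrite setTI E; exact: h.
- move=> h B mB; have := h measurableT B mB; by rewrite setTI E.
Qed.

Lemma L0bar_meas (hF : filtration F T) t (f : Omega -> \bar R) : (t <= T)%N ->
  L0bar F t f -> measurable_fun setT f.
Proof.
move=> tT h _ B mB; rewrite setTI; exact: hF.2.1 t tT _ (h B mB).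
Qed.

Lemma L0bar_mono (hF : filtration F T) t s (f : Omega -> \bar R) : (t <= s <= T)%N ->
  L0bar F t f -> L0bar F s f.
Proof.
move=> ts h B mB; exact: hF.2.2.1 t s ts _ (h B mB).
Qed.


Definition clip (a b : R) (x : \bar R) := mine (maxe x a%:E) b%:E.

Lemma clip_ge a b x : (a <= b)%R -> a%:E <= clip a b x.
Proof. by move=> ab; rewrite /clip le_min le_max lexx orbT lee_fin ab. Qed.

Lemma clip_le a b x : clip a b x <= b%:E.
Proof. by rewrite /clip ge_min lexx orbT. Qed.

Lemma clip_mono a b x y : x <= y -> clip a b x <= clip a b y.
Proof.
by move=> xy; rewrite /clip; apply: le_min2 => //; apply: le_max2.
Qed.

Lemma clip_id a b x : a%:E <= x -> x <= b%:E -> clip a b x = x.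
Proof.
by move=> ax xb; rewrite /clip (max_l ax) (min_l xb).
Qed.

Lemma clip_leX a b x y : x <= y -> a%:E <= y -> clip a b x <= y.
Proof.
move=> xy ay; rewrite /clip ge_min; apply/orP; left.
by rewrite ge_max xy ay.
Qed.

Lemma clip_meas (D : measure_display) (S : measurableType D) a b (Z : S -> \bar R) :
  measurable_fun setT Z -> measurable_fun setT (fun w => clip a b (Z w)).
Proof.
move=> mZ; apply: measurable_mine; last exact: measurable_cst.
apply: measurable_maxe => //; exact: measurable_cst.
Qed.


Lemma clip_fin a b x : (a <= b)%R -> clip a b x \is a fin_num.
Proof.
move=> ab; rewrite fin_numElt; apply/andP; split.
  exact: lt_le_trans (ltNyr a) (clip_ge _ ab).
exact: le_lt_trans (clip_le _ _ _) (ltry b).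
Qed.

Lemma essinf_exists (hF : filtration F T) t (tT : (t <= T)%N) (a b : R)
  (ab : (a <= b)%R) (X : Omega -> \bar R)
  (Xa : forall w, a%:E <= X w) (Xb : forall w, X w <= b%:E) :
  exists Y, is_essinf_bdd P F t X Y.
Proof.
pose J (Z : Omega -> \bar R) := \int[P]_w (clip a b (Z w) - a%:E).
pose fam Z := L0bar F t Z /\ as_le P Z X.
have cl0 x : 0 <= clip a b x - a%:E by rewrite sube_ge0 ?fin_numE// clip_ge.
have mJ Z : L0bar F t Z -> measurable_fun setT (fun w => clip a b (Z w) - a%:E).
  move=> LZ; apply: emeasurable_funB; last exact: measurable_cst.
  by apply: clip_meas; exact: (L0bar_meas hF tT LZ).
have J0 Z : 0 <= J Z by apply: integral_ge0 => w _.
have JB Z : L0bar F t Z -> J Z <= (b - a)%:E.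
  move=> LZ; apply: (@le_trans _ _ (\int[P]_w (cst (b - a)%:E) w)).
    apply: ge0_le_integral => //.
    - exact: mJ.
    - by move=> w _; rewrite /= EFinB EFinN; apply: leeB => //; exact: clip_le.
  rewrite integral_cst // [X in _ * X](_ : _ = 1) ?mule1 //; exact: probability_setT.
have Jmono Z1 Z2 : L0bar F t Z1 -> L0bar F t Z2 ->
    (forall w, clip a b (Z1 w) <= clip a b (Z2 w)) -> J Z1 <= J Z2.
  move=> L1 L2 h; apply: ge0_le_integral => //; try exact: mJ.
  by move=> w _; apply: leeB.
have Lcst : L0bar F t (fun _ => a%:E).
  by apply/(L0bar_mf hF _ tT); exact: measurable_cst.
have famcst : fam (fun _ => a%:E).
  by split => //; apply: aeW => w; exact: Xa.
pose c := ereal_sup [set J Z | Z in fam].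
have c0 : 0 <= c by apply: le_trans (J0 (fun _ => a%:E)) _; apply: ereal_sup_ubound; exists (fun _ => a%:E).
have cB : c <= (b - a)%:E by apply: ge_ereal_sup => _ [Z [LZ _] <-]; exact: JB.
have cfin : c \is a fin_num by rewrite ge0_fin_numE // (le_lt_trans cB) // ltry.
have adh k : exists Z, fam Z /\ c - (k.+1%:R^-1)%:E < J Z.
  have kp : (0 < k.+1%:R^-1 :> R)%R by rewrite invr_gt0.
  have [_ [Z fZ <-] lt] := ub_ereal_sup_adherent kp cfin.
  by exists Z.
have [Zs hZs] := mathcomp.classical.boolp.choice adh.
pose Y w := ereal_sup (range (fun k => clip a b (Zs k w))).
have LY : L0bar F t Y.
  apply/(L0bar_mf hF _ tT).
  have mk k : measurable_fun (setT : set (g_sigma_algebraType (F t)))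
      (fun w => clip a b (Zs k w)).
    apply: clip_meas; apply/(L0bar_mf hF _ tT); exact: (hZs k).1.1.
  have := measurable_fun_esups mk 0.
  congr measurable_fun; apply: funext => w; rewrite /Y /esups /sdrop /=.
  congr ereal_sup; apply/seteqP; split => x [k _ <-]; by exists k.
have Ya w : a%:E <= Y w.
  apply: le_trans (clip_ge _ ab) _; apply: ereal_sup_ubound; by exists 0%N.
have Yb w : Y w <= b%:E by apply: ge_ereal_sup => _ [k _ <-]; exact: clip_le.
have YX : as_le P Y X.
  have h : \forall w \ae P, forall k, Zs k w <= X w.
    by apply: ae_foralln => k; exact: (hZs k).1.2.
  apply: filterS h => w h; apply: ge_ereal_sup => _ [k _ <-].
  exact: clip_leX.
have famY : fam Y by [].
have JYfin : J Y \is a fin_num.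
  by rewrite ge0_fin_numE // (le_lt_trans (JB _ LY)) // ltry.
have JY : c <= J Y.
  apply/lee_subgt0Pr => e e0.
  pose k := Num.truncn (e^-1).
  have hk : (k.+1%:R^-1 < e)%R.
    rewrite invf_plt ?posrE //; first exact: truncnS_gt.
  apply: (@le_trans _ _ (c - (k.+1%:R^-1)%:E)).
    apply: leeB => //; rewrite lee_fin; exact: ltW.
  apply: le_trans (ltW (hZs k).2) _.
    apply: Jmono => //; first exact: (hZs k).1.1.
    move=> w; rewrite (clip_id (Ya w) (Yb w)).
    by apply: ereal_sup_ubound; exists k.
exists Y; split => //; split => // Z LZ ZX.
pose W w := maxe (Y w) (Z w).
have LW : L0bar F t W.
  apply/(L0bar_mf hF _ tT); apply: measurable_maxe; exact/(L0bar_mf hF _ tT).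
have WX : as_le P W X.
  by apply: filterS2 YX ZX => w h1 h2; rewrite /W ge_max h1 h2.
have JW : J W <= c by apply: ereal_sup_ubound; exists W.
pose f w := clip a b (Y w) - a%:E.
pose g w := clip a b (W w) - a%:E.
have ffin w : f w \is a fin_num by rewrite fin_numB clip_fin.
have fg w : f w <= g w.
  by apply: leeB => //; apply: clip_mono; rewrite /W le_max lexx.
have gf w : g w = f w + (g w - f w) by rewrite addeC subeK.
have gf0 w : 0 <= g w - f w by rewrite sube_ge0 ?ffin ?fg.
have mgf : measurable_fun setT (fun w => g w - f w).
  by apply: emeasurable_funB; [exact: mJ | exact: mJ].
have I0 : \int[P]_w (g w - f w) = 0.
  have E : J W = J Y + \int[P]_w (g w - f w).
    rewrite /J -ge0_integralD //; last exact: mJ.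
    by apply: eq_integral => w _; exact: gf.
  apply/eqP; rewrite eq_le integral_ge0 // andbT.
  rewrite -(leeD2lE _ _ JYfin) adde0 -E.
  exact: le_trans JW JY.
have ae0 : ae_eq P setT (fun w => g w - f w) (cst 0).
  apply/(ae_eq_integral_abs P measurableT mgf).
  by rewrite -I0; apply: eq_integral => w _; rewrite gee0_abs.
apply: filterS2 ae0 ZX => w h0 hZ.
have Zb : Z w <= b%:E by exact: le_trans hZ (Xb w).
have hgf : g w = f w by rewrite gf h0 //= adde0.
have e1 : clip a b (W w) = clip a b (Y w).
  have := congr1 (fun x => x + a%:E) hgf; by rewrite /= /f /g !subeK.
move: e1; rewrite (clip_id (Ya w) (Yb w)) clip_id.
- by move=> <-; rewrite /W le_max lexx orbT.
- by rewrite /W le_max Ya.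
- by rewrite /W ge_max Yb Zb.
Qed.


Lemma essinf_spec (hF : filtration F T) t (tT : (t <= T)%N) (a b : R)
  (ab : (a <= b)%R) (X : Omega -> \bar R)
  (Xa : forall w, a%:E <= X w) (Xb : forall w, X w <= b%:E) :
  is_essinf_bdd P F t X (essinf_bdd P F t X).
Proof. exact: epsilon_spec (essinf_exists hF tT ab Xa Xb). Qed.

Lemma meas_sup_range (D : measure_display) (S : measurableType D)
  (f : nat -> S -> \bar R) : (forall n, measurable_fun setT (f n)) ->
  measurable_fun setT (fun w => ereal_sup (range (fun n => f n w))).
Proof.
move=> mf; have := measurable_fun_esups mf 0.
congr measurable_fun; apply: funext => w; rewrite /esups /sdrop /=.
congr ereal_sup; apply/seteqP; split => x [k _ <-]; by exists k.
Qed.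

Lemma meas_oppe (D : measure_display) (S : measurableType D) (f : S -> \bar R) :
  measurable_fun setT f -> measurable_fun setT (fun w => - f w).
Proof. move=> mf; exact: (measurableT_comp (@oppe_measurable R setT) mf). Qed.

Lemma posA_bnd (m : Omega -> \bar R) (n : nat) :
  (forall w, 0%R%:E <= mine (maxe (m w) 0) n%:R%:E) /\
  (forall w, mine (maxe (m w) 0) n%:R%:E <= n%:R%:E).
Proof.
split => w; last by rewrite ge_min lexx orbT.
by rewrite le_min le_max lexx orbT /= lee_fin.
Qed.

Lemma negB_bnd (m : Omega -> \bar R) (n : nat) :
  (forall w, (- n%:R)%R%:E <= - mine (maxe (- m w) 0) n%:R%:E) /\
  (forall w, - mine (maxe (- m w) 0) n%:R%:E <= 0%R%:E).
Proof.
have [h1 h2] := posA_bnd (fun w => - m w) n.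
split => w; first by rewrite EFinN leeN2.
by rewrite leeNl -EFinN oppr0; exact: h1.
Qed.

Lemma Essinf_L0 (hF : filtration F T) t (tT : (t <= T)%N) (m : Omega -> \bar R) :
  L0bar F t (Essinf P F t m).
Proof.
apply/(L0bar_mf hF _ tT); rewrite /Essinf.
apply: emeasurable_funB; apply: meas_sup_range => n.
- have [h1 h2] := posA_bnd m n.
  have := (essinf_spec hF tT (ler0n _ n) h1 h2).1.
  by move/(L0bar_mf hF _ tT).
- apply: meas_oppe.
  have [h1 h2] := negB_bnd m n.
  have nn : ((- n%:R) <= 0 :> R)%R by rewrite oppr_le0.
  have := (essinf_spec hF tT nn h1 h2).1.
  by move/(L0bar_mf hF _ tT).
Qed.

Lemma maxe_split (x : \bar R) : maxe x 0 - maxe (- x) 0 = x.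
Proof.
case: x => [r| |] /=.
- have [r0|r0] := leP 0%R r.
  + rewrite (max_l (_ : 0 <= r%:E)) ?lee_fin // (max_r (_ : (- r)%:E <= 0)).
      by rewrite sube0.
    by rewrite lee_fin oppr_le0.
  + rewrite (max_r (_ : r%:E <= 0)) ?lee_fin ?ltW // (max_l (_ : 0 <= (- r)%:E)).
      by rewrite sub0e EFinN oppeK.
    by rewrite lee_fin oppr_ge0 ltW.
- by rewrite max_l ?leey // max_r ?leNye // sube0.
- by rewrite max_r ?leNye //= max_l ?leey // sub0e.
Qed.

Lemma sup_min_ge (x : \bar R) (u : nat -> \bar R) :
  (forall n, mine x n%:R%:E <= u n) -> x <= ereal_sup (range u).
Proof.
move=> h.
have hb : forall n, mine x n%:R%:E <= ereal_sup (range u).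
  by move=> n; apply: le_trans (h n) _; apply: ereal_sup_ubound; exists n.
clear h; move: hb; case: x => [r| |] hb.
- have := hb (Num.truncn r).+1; rewrite min_l //.
  by rewrite lee_fin ltW // truncnS_gt.
- move: hb; case: (ereal_sup (range u)) => [s| |] hb //.
  + have := hb (Num.truncn s).+1; rewrite min_r ?leey // lee_fin.
    by rewrite leNgt truncnS_gt.
  + by have := hb 0%N; rewrite min_r ?leey.
- exact: leNye.
Qed.

Lemma Essinf_le (hF : filtration F T) t (tT : (t <= T)%N) (m : Omega -> \bar R) :
  as_le P (Essinf P F t m) m.
Proof.
have hA : \forall w \ae P, forall n,
    essinf_bdd P F t (fun v => mine (maxe (m v) 0) n%:R%:E) w
      <= mine (maxe (m w) 0) n%:R%:E.
  apply: ae_foralln => n.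
  have [h1 h2] := posA_bnd m n.
  exact: (essinf_spec hF tT (ler0n _ n) h1 h2).2.1.
have hB : \forall w \ae P, forall n,
    essinf_bdd P F t (fun v => - mine (maxe (- m v) 0) n%:R%:E) w
      <= - mine (maxe (- m w) 0) n%:R%:E.
  apply: ae_foralln => n.
  have [h1 h2] := negB_bnd m n.
  have nn : ((- n%:R) <= 0 :> R)%R by rewrite oppr_le0.
  exact: (essinf_spec hF tT nn h1 h2).2.1.
apply: filterS2 hA hB => w hA hB.
rewrite /Essinf -[X in _ <= X]maxe_split.
apply: leeB.
- apply: ge_ereal_sup => _ [n _ <-]; apply: le_trans (hA n) _.
  by rewrite ge_min lexx.
- apply: sup_min_ge => n; rewrite /esssup_bdd leeNr; exact: hB n.
Qed.

End Aux.

Theorem proposition4p5 (d : measure_display) (Omega : measurableType d)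
  (R : realType) (P : probability Omega R) (F : nat -> set (set Omega))
  (T : nat) (p : pexp)
  (phi : nat -> (Omega -> R) -> (Omega -> \bar R))
  (mu : nat -> nat -> (Omega -> \bar R) -> (Omega -> R) -> (Omega -> \bar R)) :
  filtration F T ->
  dynamic_LM P F T p phi ->
  update_rule P F T p mu ->
  projective P F T p mu ->
  (mu_acc_tc P F T p phi mu -> weak_acc_tc P F T p phi) /\
  (mu_rej_tc P F T p phi mu -> weak_rej_tc P F T p phi).
Proof.
move=> hF _ _ [mut [_ [h2 h3]]].
split => [acc | rej] X t s m ts LX Lm mle.
- have [ts1 ts2] := andP ts.
  have tT : (t <= T)%N by exact: leq_trans (ltnW ts1) ts2.
  have ts' : (t <= s <= T)%N by rewrite (ltnW ts1) ts2.
  pose E := Essinf P F t m.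
  have LE : L0bar F t E by exact: (Essinf_L0 P hF tT m).
  have LEs : L0bar F s E by exact: (@L0bar_mono _ _ R F T hF t s E ts' LE).
  have Ele : as_le P E (phi s X).
    by apply: filterS2 (Essinf_le P hF tT m) mle => w; exact: le_trans.
  have h1 := acc X t s E ts LX LEs Ele.
  have e2 := h2 t s E X ts LEs LX; have e3 := h3 t E tT LE.
  have h4 : as_eq P (mu t s E X) E by apply: filterS2 e2 e3 => w a b; rewrite a b.
  by apply: filterS2 h1 h4 => w a b; move: a; rewrite b.
- have [ts1 ts2] := andP ts.
  have tT : (t <= T)%N by exact: leq_trans (ltnW ts1) ts2.
  have ts' : (t <= s <= T)%N by rewrite (ltnW ts1) ts2.
  pose E := Esssup P F t m.
  have LE : L0bar F t E.
    apply/(L0bar_mf hF _ tT); apply: meas_oppe.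
    exact/(L0bar_mf hF _ tT)/(Essinf_L0 P hF tT).
  have LEs : L0bar F s E by exact: (@L0bar_mono _ _ R F T hF t s E ts' LE).
  have mE : as_le P m E.
    by apply: filterS (Essinf_le P hF tT (fun v => - m v)) => w; rewrite /E /Esssup leeNr.
  have Ele : as_le P (phi s X) E.
    by apply: filterS2 mle mE => w; exact: le_trans.
  have h1 := rej X t s E ts LX LEs Ele.
  have e2 := h2 t s E X ts LEs LX; have e3 := h3 t E tT LE.
  have h4 : as_eq P (mu t s E X) E by apply: filterS2 e2 e3 => w a b; rewrite a b.
  by apply: filterS2 h1 h4 => w a b; move: a; rewrite b.
Qed.
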